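(* Let $G$ be a compact topological group admitting a continuous $2$-transitive action on a topological space $X$ satisfying the $T_1$ separation axiom (all singletons closed). Then $X$ is finite.
   Context: Continuity of the action means (at least) that each orbit map $G\to X$, $g\mapsto g\cdot x$, is continuous. *)

(* Defs.v *)
From Stdlib Require Import List.
Set Implicit Arguments.

Record is_topology (X : Type) (open : (X -> Prop) -> Prop) : Prop := {
  open_full : open (fun _ => True);
  open_union : forall (I : Type) (F : I -> X -> Prop),
      (forall i, open (F i)) -> open (fun x => exists i, F i x);
  open_inter : forall U V, open U -> open V -> open (fun x => U x /\ V x)
}.

Definition continuous (X Y : Type) (openX : (X -> Prop) -> Prop)
  (openY : (Y -> Prop) -> Prop) (f : X -> Y) : Prop :=
  forall V, openY V -> openX (fun x => V (f x)).

Definition prod_open (A B : Type) (openA : (A -> Prop) -> Prop)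
  (openB : (B -> Prop) -> Prop) (W : A * B -> Prop) : Prop :=
  forall a b, W (a, b) ->
    exists U V, openA U /\ openB V /\ U a /\ V b /\
      (forall a' b', U a' -> V b' -> W (a', b')).

Definition compact (X : Type) (open : (X -> Prop) -> Prop) : Prop :=
  forall (I : Type) (F : I -> X -> Prop),
    (forall i, open (F i)) -> (forall x, exists i, F i x) ->
    exists l : list I, forall x, exists i, In i l /\ F i x.

Definition T1 (X : Type) (open : (X -> Prop) -> Prop) : Prop :=
  forall x : X, open (fun y => y <> x).

Record is_group (G : Type) (mul : G -> G -> G) (inv : G -> G) (e : G) : Prop := {
  mulA : forall a b c, mul a (mul b c) = mul (mul a b) c;
  mul1g : forall a, mul e a = a;
  mulg1 : forall a, mul a e = a;
  mulVg : forall a, mul (inv a) a = e;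
  mulgV : forall a, mul a (inv a) = e
}.

Definition is_topological_group (G : Type) (openG : (G -> Prop) -> Prop)
  (mul : G -> G -> G) (inv : G -> G) (e : G) : Prop :=
  is_topology openG /\ is_group mul inv e /\
  continuous (prod_open openG openG) openG (fun p => mul (fst p) (snd p)) /\
  continuous openG openG inv.

Definition is_action (G X : Type) (mul : G -> G -> G) (e : G)
  (act : G -> X -> X) : Prop :=
  (forall x, act e x = x) /\
  (forall g h x, act (mul g h) x = act g (act h x)).

(** Continuity of the action, in the sense of the paper: every orbit map
    g |-> g.x is continuous. *)
Definition orbit_maps_continuous (G X : Type) (openG : (G -> Prop) -> Prop)
  (openX : (X -> Prop) -> Prop) (act : G -> X -> X) : Prop :=
  forall x : X, continuous openG openX (fun g => act g x).

Definition two_transitive (G X : Type) (act : G -> X -> X) : Prop :=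
  forall x1 x2 y1 y2 : X, x1 <> x2 -> y1 <> y2 ->
    exists g : G, act g x1 = y1 /\ act g x2 = y2.

Definition finite_type (X : Type) : Prop :=
  exists l : list X, forall x : X, In x l.

(* Main.v *)
Require Import Defs.
From Stdlib Require Import List Classical FunctionalExtensionality PropExtensionality.

Lemma open_local (G : Type) (openG : (G -> Prop) -> Prop) (HT : is_topology openG)
  (P : G -> Prop) :
  (forall g, P g -> exists U, openG U /\ U g /\ forall h, U h -> P h) -> openG P.
Proof.
  intro Hl.
  pose (I := {U : G -> Prop | openG U /\ forall h, U h -> P h}).
  assert (Ho : openG (fun x => exists i : I, proj1_sig i x)).
  { apply (open_union HT (fun i : I => proj1_sig i)). intro i; exact (proj1 (proj2_sig i)). }
  replace P with (fun x => exists i : I, proj1_sig i x); auto.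
  apply functional_extensionality; intro x; apply propositional_extensionality; split.
  - intros [i Hx]; exact (proj2 (proj2_sig i) x Hx).
  - intro Px. destruct (Hl x Px) as [U [HU [Ux HUP]]].
    exists (exist _ U (conj HU HUP)); exact Ux.
Qed.

Lemma open_ext (G : Type) (openG : (G -> Prop) -> Prop) (P Q : G -> Prop) :
  (forall x, P x <-> Q x) -> openG P -> openG Q.
Proof.
  intros H HP. replace Q with P; auto.
  apply functional_extensionality; intro x; apply propositional_extensionality; auto.
Qed.

Lemma open_finite_inter (G I : Type) (openG : (G -> Prop) -> Prop) (HT : is_topology openG)
  (F : I -> G -> Prop) (HF : forall i, openG (F i)) (l : list I) :
  openG (fun v => forall i, In i l -> F i v).
Proof.
  induction l as [|a l IH].
  - apply (open_ext _ openG (fun _ => True)); [|exact (open_full HT)].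
    intro x; split; auto. intros _ i [].
  - apply (open_ext _ openG (fun v => F a v /\ (forall i, In i l -> F i v))).
    + intro x; split.
      * intros [Ha Hr] i [<-|Hi]; auto.
      * intro Hx; split; [apply Hx; left; auto | intros i Hi; apply Hx; right; auto].
    + apply (open_inter HT); auto.
Qed.

Theorem mainTheorem6
  (G X : Type) (openG : (G -> Prop) -> Prop) (openX : (X -> Prop) -> Prop)
  (mul : G -> G -> G) (inv : G -> G) (e : G) (act : G -> X -> X)
  (HG : is_topological_group openG mul inv e)
  (HGc : compact openG)
  (HX : is_topology openX)
  (HT1 : T1 openX)
  (Hact : is_action mul e act)
  (Hcont : orbit_maps_continuous openG openX act)
  (H2 : two_transitive act) :
  finite_type X.
Proof.
  destruct HG as [HT [Hgrp [Hmul Hinv]]].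
  destruct Hact as [Hae HaM].
  assert (Hinvact : forall g x, act (inv g) (act g x) = x).
  { intros g x. rewrite <- HaM, (mulVg Hgrp). auto. }
  assert (Hactinv : forall g x, act g (act (inv g) x) = x).
  { intros g x. rewrite <- HaM, (mulgV Hgrp). auto. }
  assert (Hfib : forall x y, openG (fun g => act g x <> y)).
  { intros x y. exact (Hcont x _ (HT1 y)). }
  assert (Hleft : forall c W, openG W -> openG (fun g => W (mul c g))).
  { intros c W HW. apply (open_local _ _ HT). intros g Hg.
    destruct (Hmul W HW c g Hg) as [U [V [_ [HV [Uc [Vg HUV]]]]]].
    exists V; split; [exact HV|split; [exact Vg|]]. intros h Vh. exact (HUV c h Uc Vh). }
  destruct (classic (exists x0 : X, exists z : X, x0 <> z)) as [[x0 [z Hxz]] | Hno].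
  2:{ destruct (classic (exists x : X, True)) as [[x _]|Hn].
      - exists (x :: nil). intro y. left. apply NNPP; intro Hne.
        apply Hno; exists x, y; auto.
      - exists nil. intro y. apply Hn; exists y; auto. }
  assert (Htrans : forall y, exists g, act g x0 = y).
  { intro y. destruct (classic (y = x0)) as [->|Hy].
    - exists e; auto.
    - destruct (H2 x0 z y x0 Hxz Hy) as [g [Hg _]]; eauto. }
  assert (Hopen : openG (fun g => act g x0 = x0)).
  { apply (open_local _ _ HT). intros g Hg.
    pose (I := {p : (G -> Prop) * (G -> Prop) | openG (fst p) /\ openG (snd p) /\ snd p g /\
               forall u v, fst p u -> snd p v -> act (mul (inv u) v) x0 <> z}).
    pose (F := fun i : option I => match i with
                 | Some p => fst (proj1_sig p)
                 | None => fun k => act k x0 <> x0 end).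
    pose (F2 := fun i : option I => match i with
                 | Some p => snd (proj1_sig p)
                 | None => fun _ => True end).
    assert (HFo : forall i, openG (F i)).
    { intros [p|]; simpl; [exact (proj1 (proj2_sig p))|auto]. }
    assert (HF2o : forall i, openG (F2 i)).
    { intros [p|]; simpl; [exact (proj1 (proj2 (proj2_sig p)))|apply (open_full HT)]. }
    assert (Hcov : forall k, exists i, F i k).
    { intro k. destruct (classic (act k x0 = x0)) as [Hk|Hk].
      2:{ exists None; simpl; auto. }
      assert (Hval : act (mul (inv k) g) x0 <> z).
      { rewrite HaM, Hg. rewrite <- Hk at 1. rewrite Hinvact. auto. }
      destruct (Hmul _ (Hfib x0 z) (inv k) g Hval) as [U [V [HU [HV [Uk [Vg HUV]]]]]].
      assert (Hp : openG (fst ((fun u => U (inv u)), V)) /\ openG (snd ((fun u => U (inv u)), V))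
                   /\ snd ((fun u => U (inv u)), V) g /\
                   forall u v, fst ((fun u => U (inv u)), V) u -> snd ((fun u => U (inv u)), V) v ->
                     act (mul (inv u) v) x0 <> z).
      { simpl; repeat split; auto. intros u v Hu Hv. exact (HUV _ _ Hu Hv). }
      exists (Some (exist (fun p : (G -> Prop) * (G -> Prop) => openG (fst p) /\ openG (snd p) /\ snd p g /\ forall u v, fst p u -> snd p v -> act (mul (inv u) v) x0 <> z) ((fun u => U (inv u)), V) Hp)); simpl; auto. }
    destruct (HGc _ F HFo Hcov) as [l Hl].
    exists (fun v => forall i, In i l -> F2 i v).
    split; [apply (open_finite_inter _ _ _ HT F2 HF2o)|split].
    - intros [p|] _; simpl; [exact (proj1 (proj2 (proj2 (proj2_sig p))))|auto].
    - intros v Hv. apply NNPP; intro Hvx.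
      destruct (H2 x0 z x0 (act v x0) Hxz (fun h => Hvx (eq_sym h))) as [k [Hk1 Hk2]].
      destruct (Hl k) as [i [Hi Fik]].
      pose proof (Hv i Hi) as Hvi.
      destruct i as [p|]; simpl in *.
      + apply (proj2 (proj2 (proj2 (proj2_sig p))) k v Fik Hvi). rewrite HaM, <- Hk2, Hinvact. auto.
      + auto. }
  (* finite cover by cosets *)
  pose (I := {p : X * G | act (snd p) x0 = fst p}).
  pose (F := fun i : I => fun g => act (mul (inv (snd (proj1_sig i))) g) x0 = x0).
  assert (HFo : forall i, openG (F i)).
  { intro i. unfold F. exact (Hleft _ _ Hopen). }
  assert (Hcov : forall g, exists i, F i g).
  { intro g. assert (Hp : act (snd (act g x0, g)) x0 = fst (act g x0, g)) by reflexivity.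
    exists (exist (fun p : X * G => act (snd p) x0 = fst p) (act g x0, g) Hp). unfold F; simpl. rewrite HaM, Hinvact. auto. }
  destruct (HGc _ F HFo Hcov) as [l Hl].
  exists (map (fun i : I => fst (proj1_sig i)) l).
  intro y. destruct (Htrans y) as [g Hg].
  destruct (Hl g) as [i [Hi Fi]].
  apply in_map_iff. exists i. split; auto.
  destruct i as [[y' b] Hb]; unfold F in Fi; simpl in *.
  rewrite HaM in Fi. rewrite <- Hg, <- Hb.
  rewrite <- (Hactinv b (act g x0)), Fi. auto.
Qed.
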